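(* For an integer $l\ge1$ and a variable $x$, put $X=x+\frac1x$ and $X^{(l)}=x^l+\frac1{x^l}$. Then $$X^{(l)}=\sum_{j=0}^{\lfloor l/2\rfloor}(-1)^j\dim\mathcal{H}^j(\mathbb{R}^{l+2-2j})\,X^{l-2j}.$$
   Context: $\mathcal{H}^j(\mathbb{R}^d)$ is the space of harmonic homogeneous polynomials of degree $j$ in $d$ real variables (so $\dim\mathcal{H}^0(\mathbb{R}^1)=\dim\mathcal{H}^1(\mathbb{R}^1)=1$ and $\dim\mathcal{H}^j(\mathbb{R}^1)=0$ for $j\ge2$). *)

(* Defs.v *)
From HB Require Import structures.
From mathcomp Require Import all_boot all_order all_algebra.
From mathcomp Require Import mpoly.
From mathcomp Require Import reals.
From Stdlib Require Import ClassicalEpsilon.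
Set Implicit Arguments. Unset Strict Implicit. Unset Printing Implicit Defensive.
Import Order.TTheory GRing.Theory Num.Theory.
Local Open Scope ring_scope.

Definition laplacian (R : ringType) (d : nat) (p : {mpoly R[d]}) : {mpoly R[d]} :=
  \sum_(i < d) p^`M(i, 2).

Definition harmonic_homog (R : ringType) (d j : nat) : pred {mpoly R[d]} :=
  fun p => (p \is j.-homog) && (laplacian p == 0).

Definition has_dim (R : ringType) (V : lmodType R) (S : pred V) (n : nat) : Prop :=
  exists b : 'I_n -> V,
    [/\ forall i, S (b i),
        forall c : 'I_n -> R, \sum_(i < n) c i *: b i = 0 -> forall i, c i = 0
      & forall v, S v -> exists c : 'I_n -> R, v = \sum_(i < n) c i *: b i].

Definition dimH (R : realType) (j d : nat) : nat :=
  epsilon (inhabits 0%N) (fun n => has_dim (@harmonic_homog R d j) n).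

(* Main.v *)
Require Import Defs.
From HB Require Import structures.
From mathcomp Require Import all_boot all_order all_algebra.
From mathcomp Require Import mpoly.
From mathcomp Require Import reals.
From mathcomp Require Import ring zify.
From Stdlib Require Import ClassicalEpsilon.
Set Implicit Arguments. Unset Strict Implicit. Unset Printing Implicit Defensive.
Import Order.TTheory GRing.Theory Num.Theory.


Lemma card_deg (m b j : nat) : j < b ->
  #|[pred x : 'X_{1..m.+1 < b} | mdeg (bmnm x) == j]| = 'C(m + j, m).
Proof.
move=> jb; rewrite -card_ord_partitions.
pose g (x : 'X_{1..m.+1 < b}) : m.+1.-tuple 'I_j.+1 :=
  [tuple (inord (bmnm x i)) | i < m.+1].
have le (x : 'X_{1..m.+1 < b}) : mdeg (bmnm x) == j -> forall i, bmnm x i < j.+1.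
  by move=> /eqP <- i; rewrite ltnS mdegE (bigD1 i) //= leq_addr.
transitivity #|g @: [pred x | mdeg (bmnm x) == j]|.
  apply/esym/card_in_imset => x y hx hy e; apply/val_inj/mnmP => i.
  have := congr1 (fun t => nat_of_ord (tnth t i)) e; rewrite !tnth_mktuple.
  by rewrite !inordK ?le.
congr (#|pred_of_set _|); apply/setP => t; rewrite inE; apply/imsetP/idP.
- case=> x hx ->; rewrite big_tuple.
  under eq_bigr => i _ do rewrite tnth_mktuple inordK ?le //.
  by rewrite -mdegE.
- move=> ht.
  have hsum : (\sum_(i < m.+1) nat_of_ord (tnth t i)) = j.
    by move: ht; rewrite big_tuple => /eqP.
  have hd : mdeg [multinom val (tnth t i) | i < m.+1] < b.
    by rewrite mdegE; under eq_bigr => i _ do rewrite mnmE; rewrite hsum.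
  exists (BMultinom hd).
    rewrite inE /= mdegE; under eq_bigr => i _ do rewrite mnmE.
    by rewrite hsum.
  apply: eq_from_tnth => i; rewrite tnth_mktuple /=; apply/val_inj => /=.
  by rewrite mnmE inordK.
Qed.

Local Open Scope ring_scope.

Section LinAlg.
Variables (F : fieldType) (V : lmodType F).

Lemma comb_mul m n (v : 'rV[F]_m) (A : 'M[F]_(m, n)) (b : 'I_n -> V) :
  \sum_(i < n) (v *m A) 0 i *: b i =
  \sum_(k < m) v 0 k *: (\sum_(i < n) A k i *: b i).
Proof.
under eq_bigr => i _ do rewrite !mxE scaler_suml.
rewrite exchange_big /=; apply: eq_bigr => k _.
by rewrite scaler_sumr; apply: eq_bigr => i _; rewrite scalerA.
Qed.

Lemma has_dim_le (S : pred V) n m (b : 'I_n -> V) (b' : 'I_m -> V) :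
  (forall v, S v -> exists c : 'I_n -> F, v = \sum_(i < n) c i *: b i) ->
  (forall i, S (b' i)) ->
  (forall c : 'I_m -> F, \sum_(i < m) c i *: b' i = 0 -> forall i, c i = 0) ->
  (m <= n)%N.
Proof.
move=> span inS indep; rewrite leqNgt; apply/negP => ltnm.
have H k : exists c : 'I_n -> F, b' k = \sum_(i < n) c i *: b i by exact: span.
pose f k := proj1_sig (constructive_indefinite_description _ (H k)).
have fP k : b' k = \sum_(i < n) f k i *: b i.
  exact: (proj2_sig (constructive_indefinite_description _ (H k))).
pose A := \matrix_(k < m, i < n) f k i.
have : kermx A != 0.
  rewrite kermx_eq0 /row_free; apply/negP => /eqP rA.
  by have := rank_leq_col A; rewrite rA leqNgt ltnm.
case/rowV0Pn => v /sub_kermxP vA vn0.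
have := comb_mul v A b; rewrite vA.
under eq_bigr => i _ do rewrite mxE scale0r.
rewrite big1 // => /esym.
under eq_bigr => k _ do (under eq_bigr => i _ do rewrite mxE; rewrite -fP).
move=> /indep v0; apply/negP: vn0; rewrite negbK; apply/eqP/rowP => k.
by rewrite mxE v0.
Qed.

Lemma has_dim_uniq (S : pred V) n m : has_dim S n -> has_dim S m -> n = m.
Proof.
move=> [b [bS bi bsp]] [b' [bS' bi' bsp']]; apply/eqP; rewrite eqn_leq.
by rewrite (has_dim_le bsp' bS bi) (has_dim_le bsp bS' bi').
Qed.


Lemma kernel_dim (S : pred V) n k (e : 'I_n -> V) (L : 'M[F]_(n, k)) :
  (forall c : 'I_n -> F, \sum_(i < n) c i *: e i = 0 -> forall i, c i = 0) ->
  (forall v, S v <-> exists c : 'rV_n, v = \sum_(i < n) c 0 i *: e i /\ c *m L = 0) ->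
  has_dim S (n - \rank L).
Proof.
move=> ind hS; rewrite -mxrank_ker.
set K := row_base (kermx L).
have KL : (K <= kermx L)%MS by rewrite eq_row_base.
exists (fun r => \sum_(i < n) K r i *: e i); split.
- move=> r; apply/hS; exists (row r K); split.
    by under [RHS]eq_bigr => i _ do rewrite mxE.
  by apply/sub_kermxP; apply: submx_trans KL; apply: row_sub.
- move=> c hc; pose w : 'rV_(\rank (kermx L)) := \row_r c r.
  have : \sum_(i < n) (w *m K) 0 i *: e i = 0.
    rewrite comb_mul -[RHS]hc; apply: eq_bigr => r _; by rewrite /w mxE.
  move/ind => h.
  have : w *m K = 0 by apply/rowP => i; rewrite h mxE.
  move/eqP; rewrite mulmx_free_eq0 ?row_base_free // => /eqP w0 r.
  by have := congr1 (fun M : 'rV_(\rank (kermx L)) => M 0 r) w0; rewrite !mxE.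
- move=> v /hS [c [-> cL]].
  have cK : (c <= K)%MS by rewrite eq_row_base; apply/sub_kermxP.
  exists (fun r => (c *m pinvmx K) 0 r).
  by rewrite -comb_mul mulmxKpV.
Qed.

End LinAlg.

Lemma dimH_eq (R : realType) j d n :
  has_dim (@harmonic_homog R d j) n -> dimH R j d = n.
Proof.
move=> h; rewrite /dimH; set P := (fun n => _).
have ex : exists n, P n by exists n.
have := epsilon_spec (inhabits 0%N) P ex.
by move/has_dim_uniq => /(_ _ h).
Qed.


Section Harm.
Variables (R : numFieldType) (d j : nat).
Local Notation MP := {mpoly R[d]}.
Definition Bj := 'X_{1..d < j.+1}.
Definition Asrc : pred Bj := fun m => mdeg (bmnm m) == j.
Definition Atgt : pred Bj := fun m => (mdeg (bmnm m)).+2 == j.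
Definition ns := #|Asrc|.
Definition nt := #|Atgt|.
Definition src (a : 'I_ns) : 'X_{1..d} := bmnm (enum_val a).
Definition tgt (b : 'I_nt) : 'X_{1..d} := bmnm (enum_val b).

Lemma src_deg a : mdeg (src a) = j.
Proof. by have := enum_valP a; move=> /eqP. Qed.
Lemma tgt_deg b : (mdeg (tgt b)).+2 = j.
Proof. by have := enum_valP b; move=> /eqP. Qed.
Lemma src_inj : injective src.
Proof. by move=> a a' /val_inj /enum_val_inj. Qed.
Lemma tgt_inj : injective tgt.
Proof. by move=> a a' /val_inj /enum_val_inj. Qed.
Lemma src_surj m : mdeg m = j -> exists a, src a = m.
Proof.
move=> hm; have lt : (mdeg m < j.+1)%N by rewrite hm.
pose x : Bj := BMultinom lt.
have xA : x \in Asrc by rewrite unfold_in /Asrc /= hm.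
by exists (enum_rank_in xA x); rewrite /src enum_rankK_in.
Qed.
Lemma tgt_surj m : (mdeg m).+2 = j -> exists b, tgt b = m.
Proof.
move=> hm; have lt : (mdeg m < j.+1)%N by rewrite -hm ltnS leqW.
pose x : Bj := BMultinom lt.
have xA : x \in Atgt by rewrite unfold_in /Atgt /= hm.
by exists (enum_rank_in xA x); rewrite /tgt enum_rankK_in.
Qed.

Lemma mderiv2_coef (q : MP) i m :
  (q^`M(i, 2))@_m = q@_(U_(i) *+ 2 + m) *+ ((m i).+2 * (m i).+1).
Proof.
rewrite mcoeff_mderivm; congr (_ *+ _).
rewrite (bigD1 i) //= big1 ?muln1.
  by rewrite mnmDE mulmnE mnm1E eqxx mul1n add2n ffactnS ffactn1.
by move=> k ki; rewrite mulmnE mnm1E eq_sym (negbTE ki) mul0n ffactn0.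
Qed.

Lemma lapE (q : MP) m :
  (laplacian q)@_m = \sum_(i < d) q@_(U_(i) *+ 2 + m) *+ ((m i).+2 * (m i).+1).
Proof. by rewrite /laplacian raddf_sum; apply: eq_bigr => i _; exact: mderiv2_coef. Qed.

Lemma lap_lin (I : finType) (c : I -> R) (q : I -> MP) :
  laplacian (\sum_(a : I) c a *: q a) = \sum_(a : I) c a *: laplacian (q a).
Proof.
rewrite /laplacian.
under eq_bigr => i _ do rewrite raddf_sum.
rewrite exchange_big /=; apply: eq_bigr => a _.
by rewrite scaler_sumr; apply: eq_bigr => i _; rewrite linearZ.
Qed.

Lemma mdeg_shift (i : 'I_d) (m : 'X_{1..d}) : mdeg (U_(i) *+ 2 + m) = (mdeg m).+2.
Proof. by rewrite mdegD mdegMn mdeg1. Qed.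


Definition Lmx : 'M[R]_(ns, nt) :=
  \matrix_(a, b) (laplacian ('X_[src a] : MP))@_(tgt b).

Lemma coef_src (f : 'I_ns -> R) m :
  (\sum_a f a *: ('X_[src a] : MP))@_m = \sum_a f a * (src a == m)%:R.
Proof. by rewrite raddf_sum; apply: eq_bigr => a _ /=; rewrite mcoeffZ mcoeffX. Qed.

Lemma sum_src_eq (f : 'I_ns -> R) a0 :
  \sum_a f a * (src a == src a0)%:R = f a0.
Proof.
rewrite (bigD1 a0) //= eqxx mulr1 big1 ?addr0 // => a ne.
by rewrite (inj_eq src_inj) (negbTE ne) mulr0.
Qed.

Lemma sum_src_neq (f : 'I_ns -> R) m :
  mdeg m != j -> \sum_a f a * (src a == m)%:R = 0.
Proof.
move=> hm; apply: big1 => a _; case: eqP => [e|_]; last by rewrite mulr0.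
by move: hm; rewrite -e src_deg eqxx.
Qed.

Lemma coef_tgt (f : 'I_nt -> R) m :
  (\sum_b f b *: ('X_[tgt b] : MP))@_m = \sum_b f b * (tgt b == m)%:R.
Proof. by rewrite raddf_sum; apply: eq_bigr => a _ /=; rewrite mcoeffZ mcoeffX. Qed.

Lemma sum_tgt_eq (f : 'I_nt -> R) a0 :
  \sum_a f a * (tgt a == tgt a0)%:R = f a0.
Proof.
rewrite (bigD1 a0) //= eqxx mulr1 big1 ?addr0 // => a ne.
by rewrite (inj_eq tgt_inj) (negbTE ne) mulr0.
Qed.

Lemma src_indep (c : 'I_ns -> R) :
  \sum_a c a *: ('X_[src a] : MP) = 0 -> forall a, c a = 0.
Proof.
move=> h a; have := congr1 (mcoeff (src a)) h.
by rewrite coef_src sum_src_eq mcoeff0.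
Qed.

Lemma lapX_coef a m :
  (laplacian ('X_[src a] : MP))@_m =
  \sum_(i < d) (src a == (U_(i) *+ 2 + m)%MM)%:R *+ ((m i).+2 * (m i).+1).
Proof. by rewrite lapE; apply: eq_bigr => i _; rewrite mcoeffX. Qed.

Lemma harm_char (p : MP) :
  harmonic_homog j p <->
  exists c : 'rV_ns, p = \sum_a c 0 a *: 'X_[src a] /\ c *m Lmx = 0.
Proof.
split.
- case/andP => hom /eqP lap0.
  have pE : p = \sum_a p@_(src a) *: 'X_[src a].
    apply/mpolyP => m; rewrite coef_src.
    case: (boolP (mdeg m == j)) => [/eqP/src_surj [a0 <-]|hm].
      by rewrite sum_src_eq.
    by rewrite sum_src_neq // (dhomog_nemf_coeff hom hm).
  exists (\row_a p@_(src a)); split.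
    by rewrite {1}pE; apply: eq_bigr => a _; rewrite mxE.
  apply/rowP => b; rewrite !mxE.
  have := congr1 (mcoeff (tgt b)) lap0.
  rewrite [in laplacian p]pE lap_lin raddf_sum mcoeff0 => h; rewrite -[RHS]h.
  by apply: eq_bigr => a _ /=; rewrite !mxE mcoeffZ.
- case=> c [-> cL]; apply/andP; split.
    apply: rpred_sum => a _; apply: rpredZ.
    by rewrite dhomogX; apply/eqP; exact: src_deg.
  apply/eqP/mpolyP => m; rewrite lap_lin raddf_sum mcoeff0.
  case: (boolP ((mdeg m).+2 == j)) => [/eqP/tgt_surj [b <-]|hm].
    have := congr1 (fun M : 'rV_nt => M 0 b) cL; rewrite !mxE => h; rewrite -[RHS]h.
    by apply: eq_bigr => a _ /=; rewrite mcoeffZ mxE.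
  apply: big1 => a _; rewrite /= mcoeffZ lapX_coef big1 ?mulr0 // => i _.
  case: eqP => [e|_]; last by rewrite mul0rn.
  by move: hm; rewrite -(mdeg_shift i) -e src_deg eqxx.
Qed.


Definition mfact (m : 'X_{1..d}) : R := \prod_(k < d) ((m k)`!)%:R.

Lemma mfact_neq0 m : mfact m != 0.
Proof. by apply/prodf_neq0 => k _; rewrite pnatr_eq0 -lt0n fact_gt0. Qed.

Lemma mfact_shift i m :
  mfact (U_(i) *+ 2 + m)%MM = mfact m * ((m i).+2 * (m i).+1)%:R.
Proof.
rewrite /mfact (bigD1 i) //= [in RHS](bigD1 i) //=.
rewrite mnmDE mulmnE mnm1E eqxx mul1n add2n !factS.
rewrite (eq_bigr (fun k => ((m k)`!)%:R)) => [|k ki]; last first.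
  by rewrite mnmDE mulmnE mnm1E eq_sym (negbTE ki).
by rewrite !natrM; ring.
Qed.

Lemma r2_neq0 : (0 < d)%N -> (\sum_(i < d) 'X_[U_(i) *+ 2] : MP) != 0.
Proof.
move=> d0; pose i0 := Ordinal d0.
apply/negP => /eqP h; have := congr1 (mcoeff (U_(i0) *+ 2)%MM) h.
rewrite raddf_sum mcoeff0 (bigD1 i0) //= mcoeffX eqxx big1 ?addr0.
  by move/eqP; rewrite oner_eq0.
move=> i ne /=; rewrite mcoeffX; case: eqP => // e.
by have := congr1 (fun m : 'X_{1..d} => m i0) e; rewrite !mulmnE !mnm1E eqxx (negbTE ne).
Qed.

Lemma Lmx_rank : (0 < d)%N -> \rank Lmx = nt.
Proof.
move=> d0; rewrite -mxrank_tr; apply/eqP; change (row_free Lmx^T).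
apply: inj_row_free => u uL.
set q : MP := \sum_b (u 0 b / mfact (tgt b)) *: 'X_[tgt b].
set r2 : MP := \sum_(i < d) 'X_[U_(i) *+ 2].
have qr2 m : (q * r2)@_m = \sum_(i < d) \sum_b
    (u 0 b / mfact (tgt b)) * ((U_(i) *+ 2 + tgt b)%MM == m)%:R.
  rewrite mulr_sumr raddf_sum; apply: eq_bigr => i _ /=.
  rewrite mulr_suml raddf_sum; apply: eq_bigr => b _ /=.
  by rewrite -scalerAl -mpolyXD mcoeffZ mcoeffX addmC.
have qr0 : q * r2 = 0.
  apply/mpolyP => m; rewrite qr2 mcoeff0.
  case: (boolP (mdeg m == j)) => [/eqP/src_surj [a <-]|hm]; last first.
    apply: big1 => i _; apply: big1 => b _; case: eqP => [e|_]; last by rewrite mulr0.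
    by move: hm; rewrite -e mdeg_shift tgt_deg eqxx.
  have := congr1 (fun M : 'rV_ns => M 0 a) uL; rewrite !mxE.
  move=> h; apply: (mulIf (mfact_neq0 (src a))); rewrite mul0r -[RHS]h mulr_suml.
  under eq_bigr => i _ do rewrite mulr_suml.
  rewrite exchange_big /=.
  apply: eq_bigr => b _; rewrite !mxE lapX_coef mulr_sumr; apply: eq_bigr => i _.
  rewrite eq_sym; case: eqP => [e|_]; last by rewrite mulr0 mul0r mul0rn mulr0.
  rewrite e mfact_shift mulr1n mulr1.
  by field; apply: mfact_neq0.
move/eqP: qr0; rewrite mulf_eq0 (negbTE (r2_neq0 d0)) orbF => /eqP q0.
apply/rowP => b; have := congr1 (mcoeff (tgt b)) q0.
rewrite coef_tgt sum_tgt_eq mcoeff0 mxE => /eqP.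
by rewrite mulf_eq0 invr_eq0 (negbTE (mfact_neq0 _)) orbF => /eqP.
Qed.

End Harm.


Lemma harm_dim (R : numFieldType) d j : (0 < d)%N ->
  has_dim (@harmonic_homog R d j) (ns d j - nt d j).
Proof.
move=> d0; rewrite -(Lmx_rank R j d0).
exact: (kernel_dim (@src_indep R d j) (@harm_char R d j)).
Qed.

Lemma binsym a b : 'C(a + b, a) = 'C(a + b, b).
Proof. by rewrite -[RHS]bin_sub ?leq_addl // addnK. Qed.

Lemma dimH_val (R : realType) k i :
  dimH R i.+1 k.+2 = ('C(i + 1 + k, i + 1) + 'C(i + k, i))%N.
Proof.
rewrite (dimH_eq (harm_dim R (i.+1) (isT : (0 < k.+2)%N))).
have -> : ns k.+2 i.+1 = 'C(k.+1 + i.+1, k.+1) by rewrite /ns card_deg.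
case: i => [|i].
  have -> : nt k.+2 1 = 0%N.
    by rewrite /nt; apply: eq_card0 => x; rewrite unfold_in /Atgt.
  by rewrite subn0 addn1 binSn !add0n bin1 bin0 add1n addn1.
have -> : nt k.+2 i.+2 = 'C(k.+1 + i, k.+1).
  by rewrite /nt -(@card_deg k.+1 i.+3 i) // ltnS ltnW.
rewrite binsym [in X in (_ - X)%N]binsym.
have -> : (k.+1 + i.+2 = (i.+1 + 1 + k).+1)%N by rewrite addn1 addnS addSn addnC.
rewrite binS.
have -> : (i.+1 + 1 + k = (i.+1 + k).+1)%N by rewrite addn1.
rewrite binS.
have -> : (k.+1 + i = i.+1 + k)%N by rewrite addSn addnC.
by rewrite addnA addnK addn1.
Qed.

Lemma dimH_val0 (R : realType) k : dimH R 0 k.+2 = 1%N.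
Proof.
rewrite (dimH_eq (harm_dim R 0 (isT : (0 < k.+2)%N))).
have -> : ns k.+2 0 = 'C(k.+1 + 0, k.+1) by rewrite /ns card_deg.
have -> : nt k.+2 0 = 0%N.
  by rewrite /nt; apply: eq_card0 => x; rewrite unfold_in /Atgt.
by rewrite addn0 binn.
Qed.


Section Cheb.
Variables (R : fieldType) (X : R).

Definition Tc (l : nat) : R :=
  \sum_(j < l.+1) (-1) ^+ j * ('C(l - j, j))%:R * X ^+ (l - 2 * j).

Lemma term_rec (l j : nat) : (j < l.+2)%N ->
  (-1) ^+ j.+1 * ('C(l.+1 - j, j.+1))%:R * X ^+ (l - 2 * j) =
  X * ((-1) ^+ j.+1 * ('C(l - j, j.+1))%:R * X ^+ (l - (2 * j).+1))
  - (-1) ^+ j * ('C(l - j, j))%:R * X ^+ (l - 2 * j).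
Proof.
move=> hj; case: (leqP j l) => hjl.
  have hb : 'C(l.+1 - j, j.+1) = ('C(l - j, j.+1) + 'C(l - j, j))%N.
    by rewrite subSn // binS.
  rewrite hb natrD.
  case: (ltnP (2 * j) l) => h2.
    have he : X ^+ (l - 2 * j) = X * X ^+ (l - (2 * j).+1).
      by rewrite -exprS subnSK.
    rewrite he exprS; ring.
  rewrite (@bin_small (l - j) j.+1); last by lia.
  rewrite exprS; ring.
have -> : j = l.+1 by lia.
have b1 : 'C(l.+1 - l.+1, l.+2) = 0%N by rewrite bin_small //; lia.
have b2 : 'C(l - l.+1, l.+2) = 0%N by rewrite bin_small //; lia.
have b3 : 'C(l - l.+1, l.+1) = 0%N by rewrite bin_small //; lia.
rewrite b1 b2 b3; ring.
Qed.

Lemma Tc_rec l : Tc l.+2 = X * Tc l.+1 - Tc l.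
Proof.
rewrite /Tc big_ord_recl [in X * _]big_ord_recl big_ord_recr /=.
have b0 : 'C(l.+2 - bump 0 (@ord_max l.+1), bump 0 (@ord_max l.+1)) = 0%N.
  by rewrite bin_small //= /bump /=; lia.
rewrite b0 !mulr0 !mul0r addr0 !subn0 !bin0 !mulr1 !mul1r mulrDr -exprS.
rewrite -addrA; congr (_ + _).
rewrite mulr_sumr -sumrB; apply: eq_bigr => j _.
have e1 : (l.+2 - (bump 0 j) = l.+1 - j)%N by rewrite /bump /=; lia.
have e2 : (l.+2 - 2 * (bump 0 j) = l - 2 * j)%N by rewrite /bump /=; lia.
have e3 : (l.+1 - (bump 0 j) = l - j)%N by rewrite /bump /=; lia.
have e4 : (l.+1 - 2 * (bump 0 j) = l - (2 * j).+1)%N by rewrite /bump /=; lia.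
have e6 : bump 0 j = j.+1 by rewrite /bump /=; lia.
rewrite e1 e2 e3 e4 e6.
by apply: term_rec; apply: leqW; apply: ltn_ord.
Qed.
End Cheb.

Section Vc.
Variables (R : fieldType) (x : R).
Hypothesis hx : x != 0.
Let X := x + x^-1.
Definition Vc (l : nat) := x ^+ l + (x ^+ l)^-1.

Lemma Vc_rec l : Vc l.+2 = X * Vc l.+1 - Vc l.
Proof.
rewrite /Vc /X !exprS.
have hl : x ^+ l != 0 by rewrite expf_neq0.
by field; rewrite hl hx.
Qed.

Lemma Tc0 : Tc X 0 = 1.
Proof. by rewrite /Tc big_ord1 /= expr0 bin0 mul1r mulr1. Qed.

Lemma Tc1 : Tc X 1 = X.
Proof.
rewrite /Tc big_ord_recr big_ord1 /= expr0 bin0 mul1r subnn bin0n /= mulr0n mulr0 mul0r addr0.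
by rewrite mul1r muln0 subn0 expr1.
Qed.

Lemma Vc_T l : Vc l.+2 = Tc X l.+2 - Tc X l.
Proof.
suff : Vc l.+2 = Tc X l.+2 - Tc X l /\ Vc l.+3 = Tc X l.+3 - Tc X l.+1 by case.
have hx2 : x ^+ 2 != 0 by rewrite expf_neq0.
have hx3 : x ^+ 3 != 0 by rewrite expf_neq0.
elim: l => [|l [IH1 IH2]].
  split.
    rewrite (Tc_rec X 0) Tc0 Tc1 /Vc /X.
    by field; exact: hx.
  rewrite (Tc_rec X 1) (Tc_rec X 0) Tc0 Tc1 /Vc /X.
  by field; exact: hx.
split=> //.
rewrite Vc_rec IH1 IH2 (Tc_rec X l.+2) (Tc_rec X l).
rewrite -/X; ring.
Qed.
End Vc.


Theorem lemma3p4 (R : realType) (l : nat) (hl : (1 <= l)%N) (x : R) (hx : x != 0) :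
  x ^+ l + (x ^+ l)^-1 =
  \sum_(j < l./2.+1)
     (-1) ^+ j * ((dimH R j (l + 2 - 2 * j))%:R : R) * (x + x^-1) ^+ (l - 2 * j).
Proof.
case: l hl => [//|[|n]] _.
  rewrite big_ord1 /=.
  have -> : (1 + 2 - 2 * 0 = 1.+2)%N by [].
  by rewrite dimH_val0 expr0 mul1r muln0 subn0 !expr1 ?mulr1n ?mul1r.
set X := x + x^-1.
pose G i : R := (-1) ^+ i.+1 * ('C(n.+1 - i, i.+1) + 'C(n - i, i))%:R * X ^+ (n - 2 * i).
rewrite -/(Vc x n.+2) Vc_T // -/X.
rewrite big_ord_recl /=.
have -> : (n.+2 + 2 - 2 * 0 = n.+2.+2)%N by lia.
rewrite dimH_val0 expr0 !mul1r muln0 subn0.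
have hA : \sum_(i < (n.+2)./2) (-1) ^+ bump 0 i *
      (dimH R (bump 0 i) (n.+2 + 2 - 2 * bump 0 i))%:R * X ^+ (n.+2 - 2 * bump 0 i)
    = \sum_(i < n./2.+1) G i.
  apply: eq_bigr => i _.
  have hi : (2 * i <= n)%N.
    have := ltn_ord i; rewrite /= ltnS geq_half_double -mul2n //.
  have e3 : bump 0 i = i.+1 by rewrite /bump.
  rewrite e3.
  have e1 : (n.+2 + 2 - 2 * i.+1 = (n - 2 * i).+2)%N by lia.
  have e2 : (n.+2 - 2 * i.+1 = n - 2 * i)%N by lia.
  rewrite e1 e2 dimH_val /G.
  have e4 : (i + 1 + (n - 2 * i) = n.+1 - i)%N by lia.
  have e5 : (i + (n - 2 * i) = n - i)%N by lia.
  by rewrite e4 e5 addn1.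
rewrite hA.
have hB : Tc X n.+2 - Tc X n = X ^+ n.+2 + \sum_(i < n.+2) G i.
  rewrite /Tc big_ord_recl /= subn0 bin0 expr0 mul1r ?mulr1n ?mulr1 -addrA.
  congr (_ + _); first by rewrite ?mulr1n mul1r.
  have ext : \sum_(j < n.+1) (-1) ^+ j * ('C(n - j, j))%:R * X ^+ (n - 2 * j)
    = \sum_(j < n.+2) (-1) ^+ j * ('C(n - j, j))%:R * X ^+ (n - 2 * j).
    rewrite [RHS]big_ord_recr /= (@bin_small (n - n.+1) n.+1); last by lia.
    by rewrite mulr0 mul0r addr0.
  rewrite ext -sumrB; apply: eq_bigr => i _; rewrite /G /bump /=.
  have e1 : (n.+2 - (1 + i) = n.+1 - i)%N by lia.
  have e2 : (n.+2 - 2 * (1 + i) = n - 2 * i)%N by lia.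
  rewrite e1 e2 add1n natrD exprS; ring.
rewrite hB; congr (_ + _).
rewrite [RHS](big_ord_widen n.+2 G); last by rewrite ltnS leq_half_double; lia.
rewrite [RHS]big_mkcond; apply: eq_bigr => i _; case: ifP => // h.
move: h; rewrite ltnS leqNgt => /negbFE; rewrite ltn_half_double => h.
rewrite /G (@bin_small (n.+1 - i) i.+1); last by lia.
rewrite (@bin_small (n - i) i); last by lia.
by rewrite mulr0 mul0r.
Qed.
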